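(* Let $\psi(t)$ be a rational function, $a\in\mathbb{C}$ and $d\in\mathbb{Z}$, such that the pole of $\psi$ at $t=a$ has order at most $d$. Then $\psi(t)$ is symplectic of order $d$ at $t=a$ if and only if $$\psi\!\left(\frac{a^2-2a+(1-a)t}{a-1-t}\right)=(a-1-t)^d\,\psi(t).$$
   Context: A formal power series $\varphi(x)=\sum_{i\ge0}\gamma_i x^i\in\mathbb{C}[[x]]$ is called symplectic if for every $m\ge1$ one has $\sum_{k=0}^{m-1}(-1)^k\binom{m-1}{k}\gamma_{m+k}=0$. A meromorphic function $\psi(t)$ whose pole at $t=a$ has order at most $d$ is called symplectic at $a$ of order $d$ if the formal power series $x^d\psi(a-x)\in\mathbb{C}[[x]]$ is symplectic. *)

(* Defs.v *)
(* C = R[i] for a realType R (a model of the complex numbers). *)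
From HB Require Import structures.
From mathcomp Require Import all_boot all_order all_algebra.
From mathcomp Require Import reals complex.
Set Implicit Arguments. Unset Strict Implicit. Unset Printing Implicit Defensive.
Import Order.TTheory GRing.Theory Num.Theory.
Local Open Scope ring_scope.

Notation "x %:F" := (@FracField.tofrac _ x).

Section Symplectic.
Variable F : fieldType.

(* A formal power series phi(x) = sum_i gamma_i x^i is given by its
   coefficient sequence gamma : nat -> F. *)
Definition symplectic_series (gamma : nat -> F) : Prop :=
  forall m : nat, (1 <= m)%N ->
    \sum_(k < m) (-1) ^+ k * ('C(m.-1, k))%:R * gamma (m + k)%N = 0.

(* gamma is the power series expansion (in C[[x]]) of the rational function
   P(x)/Q(x), Q <> 0: i.e. Q(x) * (sum_i gamma_i x^i) = P(x) in F[[x]]. *)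
Definition series_expansion (P Q : {poly F}) (gamma : nat -> F) : Prop :=
  forall n : nat, \sum_(k < n.+1) Q`_k * gamma (n - k)%N = P`_n.

(* For psi = p/q, the rational function x^d psi(a - x) written as
   num/den with polynomials in x. *)
Definition shifted_num (p : {poly F}) (a : F) (d : int) : {poly F} :=
  match d with
  | Posz n => 'X^n * (p \Po (a%:P - 'X))
  | Negz _ => p \Po (a%:P - 'X)
  end.

Definition shifted_den (q : {poly F}) (a : F) (d : int) : {poly F} :=
  match d with
  | Posz _ => q \Po (a%:P - 'X)
  | Negz n => 'X^(n.+1) * (q \Po (a%:P - 'X))
  end.

(* The pole of psi = p/q at t = a has order at most d, i.e. the formal
   Laurent series x^d psi(a - x) lies in F[[x]]. *)
Definition pole_order_le (p q : {poly F}) (a : F) (d : int) : Prop :=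
  exists gamma, series_expansion (shifted_num p a d) (shifted_den q a d) gamma.

Definition symplectic_at (p q : {poly F}) (a : F) (d : int) : Prop :=
  exists gamma, series_expansion (shifted_num p a d) (shifted_den q a d) gamma
                /\ symplectic_series gamma.

Definition poly_subst (p : {poly F}) (m : {fraction {poly F}}) : {fraction {poly F}} :=
  (map_poly (fun c : F => (c%:P)%:F) p).[m].

Definition moeb (a : F) : {fraction {poly F}} :=
  ((a ^+ 2 - 2 * a)%:P + (1 - a) *: 'X)%:F / ((a - 1)%:P - 'X)%:F.

End Symplectic.

(* Main.v *)
Require Import Defs.
From HB Require Import structures.
From mathcomp Require Import all_boot all_order all_algebra.
From mathcomp Require Import reals complex.
From mathcomp Require Import ring zify.
Import Order.TTheory GRing.Theory Num.Theory.
Local Open Scope ring_scope.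
Set Implicit Arguments. Unset Strict Implicit. Unset Printing Implicit Defensive.


Lemma fr1 (L : fieldType) (c b x e : L) : e != 0 -> c * (b * x) = x * e * (c * (b / e)).
Proof. move=> he. by field. Qed.

Lemma fr2 (L : fieldType) (x y : L) : y != 0 -> x - y = 1 -> x / y - 1 = y^-1.
Proof. move=> hy hxy. have -> : x = y + 1 by rewrite -hxy addrC subrK. by field. Qed.
Lemma fr3 (L : fieldType) (x y : L) (i k : nat) : y != 0 -> (i <= k)%N ->
  (x / y) ^+ i * y^-1 ^+ (k - i) = x ^+ i / y ^+ k.
Proof.
move=> hy hik; rewrite exprMn -!exprVn -mulrA -exprD subnKC //.
Qed.

Lemma fr4 (L : fieldType) (x y : L) (i k : nat) : y != 0 -> (i <= k)%N ->
  y ^+ k * (x / y) ^+ i = x ^+ i * y ^+ (k - i).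
Proof.
move=> hy hik; rewrite exprMn exprVn.
have -> : y ^+ k = y ^+ (k - i) * y ^+ i by rewrite -exprD subnK.
have : y ^+ i != 0 by rewrite expf_neq0.
move: (y ^+ i) (y ^+ (k - i)) (x ^+ i) => e z w he. by field.
Qed.
Lemma fr5 (L : fieldType) (y : L) (k : nat) : y != 0 -> y ^+ k * (y^-1) ^+ k = 1.
Proof. by move=> hy; rewrite exprVn mulfV ?expf_neq0. Qed.

Section Gen.
Variable F : fieldType.
Local Notation K := {fraction {poly F}}.
Local Notation PF := (@FracField.tofrac {poly F}).
Implicit Types (f g : {poly F}) (m : K).

Lemma psE (f : {poly F}) m : poly_subst f m = (map_poly (PF \o polyC) f).[m].
Proof. by []. Qed.

Lemma ps_add f g m : poly_subst (f + g) m = poly_subst f m + poly_subst g m.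
Proof. by rewrite !psE rmorphD hornerD. Qed.
Lemma ps_opp f m : poly_subst (- f) m = - poly_subst f m.
Proof. by rewrite !psE rmorphN hornerN. Qed.
Lemma ps_sub f g m : poly_subst (f - g) m = poly_subst f m - poly_subst g m.
Proof. by rewrite ps_add ps_opp. Qed.
Lemma ps_mul f g m : poly_subst (f * g) m = poly_subst f m * poly_subst g m.
Proof. by rewrite !psE rmorphM hornerM. Qed.
Lemma ps_C c m : poly_subst c%:P m = (c%:P)%:F.
Proof. by rewrite psE map_polyC hornerC. Qed.
Lemma ps_1 m : poly_subst 1 m = 1.
Proof. by rewrite -polyC1 ps_C tofrac1. Qed.
Lemma ps_X m : poly_subst 'X m = m.
Proof. by rewrite psE map_polyX hornerX. Qed.
Lemma ps_exp f n m : poly_subst (f ^+ n) m = poly_subst f m ^+ n.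
Proof. by rewrite !psE rmorphXn horner_exp. Qed.
Lemma ps_scale c f m : poly_subst (c *: f) m = (c%:P)%:F * poly_subst f m.
Proof. by rewrite -mul_polyC ps_mul ps_C. Qed.
Lemma ps_sum (I : finType) (G : I -> {poly F}) m :
  poly_subst (\sum_i G i) m = \sum_i poly_subst (G i) m.
Proof. by rewrite !psE rmorph_sum horner_sum. Qed.
Lemma ps_comp f g m : poly_subst (f \Po g) m = poly_subst f (poly_subst g m).
Proof. by rewrite !psE map_comp_poly horner_comp. Qed.
Lemma ps_wide f k m : (size f <= k)%N ->
  poly_subst f m = \sum_(i < k) ((f`_i)%:P)%:F * m ^+ i.
Proof.
move=> hs; rewrite psE (@horner_coef_wide _ k); last by rewrite size_map_poly.
by apply: eq_bigr => i _; rewrite coef_map.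
Qed.
Lemma ps_Xfrac f : poly_subst f ('X)%:F = f%:F.
Proof.
rewrite (@ps_wide f (size f)) // -[in RHS](coefK f) poly_def rmorph_sum.
by apply: eq_bigr => i _; rewrite -mul_polyC rmorphM rmorphXn.
Qed.

Definition Hom (k : nat) f (u v : {poly F}) : {poly F} :=
  \sum_(i < k.+1) f`_i *: (u ^+ i * v ^+ (k - i)).
Definition sg : K := ('X)%:F / ('X - 1)%:F.
Definition Sig k f := Hom k f 'X ('X - 1).

Lemma Hom_frac k f u v : (size f <= k.+1)%N -> v != 0 ->
  (Hom k f u v)%:F = v%:F ^+ k * poly_subst f (u%:F / v%:F).
Proof.
move=> hs hv; rewrite (@ps_wide f k.+1) // mulr_sumr rmorph_sum.
apply: eq_bigr => i _.
have hvF : v%:F != 0 by rewrite tofrac_eq0.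
rewrite -mul_polyC !rmorphM !rmorphXn exprMn exprVn.
have hik : (i <= k)%N by rewrite -ltnS.
have -> : v%:F ^+ k = v%:F ^+ (k - i) * v%:F ^+ i by rewrite -exprD subnK.
set a := v%:F. set b := (u%:F ^+ i). set c := ((f`_i)%:P)%:F.
have hai : a ^+ i != 0 by rewrite expf_neq0.
exact: fr1.
Qed.

Lemma XsubC1_neq0 : ('X - 1 : {poly F}) != 0.
Proof. by rewrite -size_poly_eq0 -polyC1 size_XsubC. Qed.
Lemma size_XsubC1 : size ('X - 1 : {poly F}) = 2%N.
Proof. by rewrite -polyC1 size_XsubC. Qed.
Local Notation xf := (('X : {poly F})%:F).
Local Notation yf := (('X - 1 : {poly F})%:F).
Lemma yf_neq0 : yf != 0.
Proof. by rewrite tofrac_eq0 XsubC1_neq0. Qed.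

Lemma Sig_frac k f : (size f <= k.+1)%N -> (Sig k f)%:F = yf ^+ k * poly_subst f sg.
Proof. move=> hs; exact: (@Hom_frac k f 'X ('X - 1) hs XsubC1_neq0). Qed.

Lemma ps_Hom k f (u v : {poly F}) m : poly_subst (Hom k f u v) m =
  \sum_(i < k.+1) ((f`_i)%:P)%:F * ((poly_subst u m) ^+ i * (poly_subst v m) ^+ (k - i)).
Proof.
rewrite /Hom ps_sum; apply: eq_bigr => i _.
by rewrite ps_scale ps_mul !ps_exp.
Qed.

Lemma size_Hom k f (u v : {poly F}) : (size u <= 2)%N -> (size v <= 2)%N -> (size (Hom k f u v) <= k.+1)%N.
Proof.
move=> hu hv; rewrite /Hom; apply: (big_ind (fun p : {poly F} => (size p <= k.+1)%N)).
- by rewrite size_poly0.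
- by move=> p1 p2 h1 h2; rewrite (leq_trans (size_polyD _ _)) // geq_max h1 h2.
move=> i _; rewrite (leq_trans (size_scale_leq _ _)) //.
rewrite (leq_trans (size_polyMleq _ _)) //.
have h1 := size_poly_exp_leq u i. have h2 := size_poly_exp_leq v (k - i).
have hi := ltn_ord i.
have h1' : (size (u ^+ i) <= i.+1)%N.
  apply: (leq_trans h1); have : ((size u).-1 <= 1)%N by lia. nia.
have h2' : (size (v ^+ (k - i)) <= (k - i).+1)%N.
  apply: (leq_trans h2); have : ((size v).-1 <= 1)%N by lia. nia.
lia.
Qed.


Lemma ps_sg_X : poly_subst 'X sg = sg.
Proof. exact: ps_X. Qed.
Lemma xy1 : xf - yf = 1.
Proof. by rewrite -tofracB opprB addrC subrK tofrac1. Qed.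
Lemma ps_sg_Y : poly_subst ('X - 1) sg = yf^-1.
Proof. by rewrite ps_sub ps_X ps_1 /sg fr2 // ?yf_neq0 // xy1. Qed.

Lemma size_Sig k f : (size (Sig k f) <= k.+1)%N.
Proof. by apply: size_Hom; rewrite ?size_polyX ?size_XsubC1. Qed.

Lemma ps_Sig k f : (size f <= k.+1)%N -> poly_subst (Sig k f) sg = f%:F / yf ^+ k.
Proof.
move=> hs. rewrite /Sig ps_Hom ps_sg_X ps_sg_Y.
rewrite -[in RHS](ps_Xfrac f).
rewrite (@ps_wide f k.+1) // mulr_suml.
apply: eq_bigr => i _.
have hik : (i <= k)%N by rewrite -ltnS.
rewrite /sg (@fr3 _ xf yf i k yf_neq0 hik).
by rewrite mulrA.
Qed.

Lemma tofrac_inj (p1 p2 : {poly F}) : p1%:F = p2%:F -> p1 = p2.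
Proof. by move=> h; apply/eqP; rewrite -tofrac_eq h. Qed.

Lemma Sig_invol k f : (size f <= k.+1)%N -> Sig k (Sig k f) = f.
Proof.
move=> hs; apply: tofrac_inj; rewrite Sig_frac ?size_Sig // ps_Sig //.
by rewrite mulrC mulfVK // expf_neq0 // yf_neq0.
Qed.

Lemma Sig_mul a b f g : (size f <= a.+1)%N -> (size g <= b.+1)%N ->
  Sig (a + b) (f * g) = Sig a f * Sig b g.
Proof.
move=> hf hg; apply: tofrac_inj.
have hfg : (size (f * g)%R <= (a + b).+1)%N.
  rewrite (leq_trans (size_polyMleq _ _)) //. lia.
rewrite tofracM !Sig_frac // ps_mul exprD.
by rewrite -!mulrA; congr (_ * _); rewrite mulrCA.
Qed.

Lemma Sig_Xn k i : (i <= k)%N -> Sig k 'X^i = 'X^i * ('X - 1) ^+ (k - i).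
Proof.
move=> hik; apply: tofrac_inj.
rewrite Sig_frac ?size_polyXn // ps_exp ps_X tofracM !tofracXn.
exact: (@fr4 _ xf yf i k yf_neq0 hik).
Qed.

Lemma Sig_Ypow k : Sig k (('X - 1) ^+ k) = 1.
Proof.
apply: tofrac_inj.
have hs : (size (('X - 1 : {poly F}) ^+ k)%R <= k.+1)%N.
  by rewrite -polyC1 size_exp_XsubC.
rewrite Sig_frac // ps_exp ps_sg_Y tofrac1.
exact: (@fr5 _ yf k yf_neq0).
Qed.

Lemma Sig_succ k f : (size f <= k.+1)%N -> Sig k.+1 f = ('X - 1) * Sig k f.
Proof.
move=> hs; apply: tofrac_inj.
by rewrite tofracM !Sig_frac ?(leq_trans hs) // exprS mulrA.
Qed.

Lemma Sig_add k f g : Sig k (f + g) = Sig k f + Sig k g.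
Proof. by rewrite /Sig /Hom -big_split; apply: eq_bigr => i _; rewrite coefD scalerDl. Qed.
Lemma Sig_opp k f : Sig k (- f) = - Sig k f.
Proof. by rewrite /Sig /Hom -sumrN; apply: eq_bigr => i _; rewrite coefN scaleNr. Qed.
Lemma Sig_sub k f g : Sig k (f - g) = Sig k f - Sig k g.
Proof. by rewrite Sig_add Sig_opp. Qed.
Lemma Sig_scale k c f : Sig k (c *: f) = c *: Sig k f.
Proof. by rewrite /Sig /Hom scaler_sumr; apply: eq_bigr => i _; rewrite coefZ scalerA. Qed.

End Gen.


Section Cong.
Variable F : fieldType.
Implicit Types (f g h : {poly F}).

Definition cong n f g := forall j, (j <= n)%N -> f`_j = g`_j.

Lemma cong_refl n f : cong n f f. Proof. by []. Qed.
Lemma cong_sym n f g : cong n f g -> cong n g f.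
Proof. by move=> h j hj; rewrite h. Qed.
Lemma cong_trans n f g h : cong n f g -> cong n g h -> cong n f h.
Proof. by move=> h1 h2 j hj; rewrite h1 // h2. Qed.
Lemma cong_add n f1 g1 f2 g2 : cong n f1 g1 -> cong n f2 g2 -> cong n (f1 + f2) (g1 + g2).
Proof. by move=> h1 h2 j hj; rewrite !coefD h1 // h2. Qed.
Lemma cong_sub n f1 g1 f2 g2 : cong n f1 g1 -> cong n f2 g2 -> cong n (f1 - f2) (g1 - g2).
Proof. by move=> h1 h2 j hj; rewrite !coefB h1 // h2. Qed.
Lemma cong_mull n h f g : cong n f g -> cong n (h * f) (h * g).
Proof.
move=> hc j hj; rewrite !coefM; apply: eq_bigr => i _; rewrite hc //.
by rewrite (leq_trans (leq_subr _ _)).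
Qed.
Lemma cong_mulr n h f g : cong n f g -> cong n (f * h) (g * h).
Proof. by move=> hc; rewrite ![_ * h]mulrC; apply: cong_mull. Qed.
Lemma cong_le m n f g : (m <= n)%N -> cong n f g -> cong m f g.
Proof. by move=> hmn hc j hj; rewrite hc // (leq_trans hj). Qed.
Lemma cong_eq f g : (forall n, cong n f g) -> f = g.
Proof. by move=> h; apply/polyP => j; apply: (h j). Qed.
Lemma cong_subr0 n f g : cong n f g <-> cong n (f - g) 0.
Proof.
split=> h j hj; first by rewrite coefB h // subrr coef0.
by apply/eqP; rewrite -subr_eq0 -coefB h // coef0.
Qed.
Lemma cong_Xn n v f g : cong (n + v) ('X^v * f) ('X^v * g) -> cong n f g.
Proof.
move=> h j hj; have := h (j + v)%N; rewrite !coefXnM ltnNge leq_addl /= addnK.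
by apply; rewrite leq_add2r.
Qed.
Lemma cong_Xn0 n f : cong n ('X^(n.+1) * f) 0.
Proof. by move=> j hj; rewrite coefXnM ltnS hj coef0. Qed.

Lemma cong_cancel n (Y : {poly F}) f g : Y`_0 != 0 -> cong n (Y * f) (Y * g) -> cong n f g.
Proof.
move=> hY /cong_subr0; rewrite -mulrBr => h; apply/cong_subr0.
move: (f - g) h => e h.
elim: n h => [|n IH] h.
  move=> j; rewrite leqn0 => /eqP ->; have := h 0%N (leqnn _).
  rewrite coefM big_ord1 coef0 subnn => /eqP; rewrite mulf_eq0 (negbTE hY) /= => /eqP ->.
  by rewrite ?coef0.
have IH' : cong n e 0 by apply: IH; apply: cong_le h; apply: leqnSn.
move=> j; rewrite leq_eqVlt => /orP [/eqP ->|]; last by rewrite ltnS; apply: IH'.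
have := h n.+1 (leqnn _); rewrite coefM big_ord_recl subn0 big1 ?addr0.
  by move/eqP; rewrite coef0 mulf_eq0 (negbTE hY) /= => /eqP ->; rewrite ?coef0.
move=> i _; rewrite IH' ?coef0 ?mulr0 //.
by rewrite lift0 subSS leq_subr.
Qed.

Lemma coef0_mul f g : (f * g)`_0 = f`_0 * g`_0.
Proof. by rewrite -!horner_coef0 hornerM. Qed.
Lemma coef0_exp f k : (f ^+ k)`_0 = f`_0 ^+ k.
Proof. by rewrite -!horner_coef0 horner_exp. Qed.


Lemma Sig_cong0 n k h : cong n h 0 -> cong n (Sig k h) 0.
Proof.
move=> hc j hj; rewrite coef0 /Sig /Hom coef_sum big1 // => i _.
rewrite coefZ; case: (leqP i n) => hin.
  by rewrite (hc i hin) coef0 mul0r.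
by rewrite coefXnM (leq_ltn_trans hj hin) mulr0.
Qed.
Lemma Sig_cong n k f g : cong n f g -> cong n (Sig k f) (Sig k g).
Proof. by move/cong_subr0 => h; apply/cong_subr0; rewrite -Sig_sub; apply: Sig_cong0. Qed.

Definition trunc (gam : nat -> F) n : {poly F} := \poly_(i < n.+1) gam i.
Definition Wp n : {poly F} := - \poly_(l < n.+1) 1.
Definition INV gam := forall n, cong n (Sig n (trunc gam n)) (('X - 1) ^+ n * trunc gam n).
Definition Ssum (gam : nat -> F) m' :=
  \sum_(k < m'.+1) (-1) ^+ k * ('C(m', k))%:R * gam (m'.+1 + k)%N.

Lemma W0 n : (Wp n)`_0 = -1.
Proof. by rewrite coefN coef_poly. Qed.

Lemma XW n : cong n (('X - 1) * Wp n) 1.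
Proof.
move=> j hj; rewrite mulrBl mul1r coefB coefXM coefN coef1 /Wp !coefN !coef_poly.
case: j hj => [|j] hj /=; first by rewrite sub0r opprK.
by rewrite ltnS (ltnW hj) ltnS hj opprK addNr.
Qed.

Lemma XW_pow n e : cong n (('X - 1) ^+ e * Wp n ^+ e) 1.
Proof.
rewrite -exprMn; elim: e => [|e IH]; first by rewrite expr0; apply: cong_refl.
rewrite exprS; apply: (cong_trans (cong_mull _ IH)); rewrite mulr1; exact: XW.
Qed.


Lemma size_XsubC1_exp k : size (('X - 1 : {poly F}) ^+ k) = k.+1.
Proof. by rewrite -polyC1 size_exp_XsubC. Qed.

Lemma mono_R n K i : (n <= K.+1)%N -> (i <= K)%N ->
  ('X^i * ('X - 1) ^+ (K - i) * Wp n ^+ (K.+1 - n))`_n = - (i == n)%:R.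
Proof.
move=> hnK hiK.
case: (ltngtP n i) => hni.
- by rewrite -mulrA coefXnM hni mulr0n oppr0.
-
  have -> : (K - i = (n.-1 - i) + (K.+1 - n))%N by lia.
  rewrite exprD mulrA -mulrA.
  have hc := cong_mull ('X^i * ('X - 1) ^+ (n.-1 - i)) (@XW_pow n (K.+1 - n)).
  rewrite (hc n (leqnn n)) mulr1 mulr0n oppr0 nth_default //.
  rewrite (leq_trans (size_polyMleq _ _)) // size_polyXn size_XsubC1_exp. lia.
- subst i.
  have -> : (K.+1 - n = (K - n).+1)%N by lia.
  rewrite -mulrA coefXnM ltnn subnn exprS mulrCA coef0_mul W0.
  rewrite (@XW_pow n (K - n) 0%N (leq0n _)) coef1 /=.
  by rewrite mulr1.
Qed.

Lemma R_lemma n K (P : {poly F}) : (n <= K.+1)%N -> (size P <= K.+1)%N ->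
  (Sig K P * Wp n ^+ (K.+1 - n))`_n = - P`_n.
Proof.
move=> hnK hP.
rewrite /Sig /Hom mulr_suml coef_sum.
have -> : \sum_(i < K.+1) (P`_i *: ('X^i * ('X - 1) ^+ (K - i)) * Wp n ^+ (K.+1 - n))`_n
   = \sum_(i < K.+1) (if (i == n :> nat) then - P`_i else 0).
  apply: eq_bigr => i _.
  have hi : (i <= K)%N by rewrite -ltnS.
  rewrite -scalerAl coefZ (mono_R hnK hi).
  by case: eqP => _; rewrite ?mulr1n ?mulrN1 ?mulr0n ?oppr0 ?mulr0.
rewrite -big_mkcond /= (big_ord1_eq _ (fun i => - P`_i)).
case: ifP => // hn; rewrite nth_default ?oppr0 //.
by rewrite (leq_trans hP) // leqNgt hn.
Qed.


Lemma Scoef gam m' N : (m'.*2.+1 <= N)%N ->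
  Ssum gam m' = (trunc gam N * ('X - 1) ^+ m')`_(m'.*2.+1).
Proof.
move=> hN.
rewrite [('X - 1) ^+ _]exprDn mulr_sumr coef_sum /Ssum.
apply: eq_bigr => i _.
have hi := ltn_ord i.
have hc : ((- 1 : {poly F}) ^+ i *+ 'C(m', i)) = ((-1) ^+ i *+ 'C(m', i))%:P.
  by rewrite rmorphMn rmorphXn rmorphN rmorph1.
rewrite -mulrnAr hc mulrA coefMC coefMXn.
have -> : (m'.*2.+1 < m' - i)%N = false by lia.
rewrite coef_poly.
have -> : (m'.*2.+1 - (m' - i) < N.+1)%N = true by lia.
have -> : (m'.*2.+1 - (m' - i) = m'.+1 + i)%N by lia.
by rewrite mulrC mulr_natr.
Qed.


Lemma size_trunc gam n : (size (trunc gam n) <= n.+1)%N.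
Proof. exact: size_poly. Qed.

Lemma K1 gam m' : let n := m'.*2.+1 in
  (Sig n (trunc gam n) * Wp n ^+ m'.+1)`_n = - Ssum gam m'.
Proof.
move=> n; set f := trunc gam n.
have hP : (size (f * ('X - 1) ^+ m')%R <= (n + m').+1)%N.
  rewrite (leq_trans (size_polyMleq _ _)) // size_XsubC1_exp.
  have := size_trunc gam n; rewrite -/f; lia.
have hS : Sig (n + m') (f * ('X - 1) ^+ m') = Sig n f.
  rewrite Sig_mul ?size_trunc ?size_XsubC1_exp // Sig_Ypow mulr1 //.
have := @R_lemma n (n + m') _ (leqW (leq_addr _ _)) hP.
rewrite hS.
have -> : ((n + m').+1 - n = m'.+1)%N by lia.
by move=> ->; rewrite (@Scoef gam m' n (leqnn _)).
Qed.

Lemma K2 gam m' : let n := m'.*2.+1 in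
  ((('X - 1) ^+ n * trunc gam n) * Wp n ^+ m'.+1)`_n = Ssum gam m'.
Proof.
move=> n; set f := trunc gam n.
have -> : ('X - 1 : {poly F}) ^+ n = ('X - 1) ^+ m' * ('X - 1) ^+ m'.+1.
  by rewrite -exprD; congr (_ ^+ _); rewrite /n; lia.
rewrite [_ * f]mulrC -!mulrA.
have hc := cong_mull (f * ('X - 1) ^+ m') (@XW_pow n m'.+1).
rewrite mulrA (hc n (leqnn n)) mulr1.
by rewrite (@Scoef gam m' n (leqnn _)).
Qed.


Lemma coef0_Y k : (('X - 1 : {poly F}) ^+ k)`_0 = (-1) ^+ k.
Proof. by rewrite coef0_exp coefB coefX coef1 sub0r. Qed.
Lemma W0pow n k : (Wp n ^+ k)`_0 = (-1) ^+ k.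
Proof. by rewrite coef0_exp W0. Qed.

Lemma two_cancel (x : F) : (2%:R : F) != 0 -> x = - x -> x = 0.
Proof.
move=> h2 hx; have : x *+ 2 = 0 by rewrite mulr2n {1}hx addNr.
by move/eqP; rewrite -mulr_natr mulf_eq0 (negbTE h2) orbF => /eqP.
Qed.

Lemma INV_to_S gam : (2%:R : F) != 0 -> INV gam -> forall m', Ssum gam m' = 0.
Proof.
move=> h2 hI m'.
have e1 := K1 gam m'. have e2 := K2 gam m'.
have hc := cong_mulr (Wp m'.*2.+1 ^+ m'.+1) (hI m'.*2.+1).
rewrite /= (hc _ (leqnn _)) e2 in e1.
apply: two_cancel => //; exact: e1.
Qed.

Lemma S_to_INV gam : (2%:R : F) != 0 -> (forall m', Ssum gam m' = 0) -> INV gam.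
Proof.
move=> h2 hS N; elim/ltn_ind: N => N IH.
apply/cong_subr0.
have pre : forall j, (j < N)%N -> (Sig N (trunc gam N) - ('X - 1) ^+ N * trunc gam N)`_j = 0.
  case: N IH => [|M] IH j hj; first by [].
  have hfg : cong M (trunc gam M.+1) (trunc gam M).
    by move=> i hi; rewrite /trunc !coef_poly !ltnS hi (leqW hi).
  have c1 : cong M (Sig M.+1 (trunc gam M.+1)) (('X - 1) ^+ M.+1 * trunc gam M.+1).
    apply: (cong_trans (Sig_cong M.+1 hfg)); rewrite Sig_succ ?size_trunc //.
    rewrite exprS -mulrA; apply: cong_mull.
    apply: (cong_trans (IH M (ltnSn M))); apply: cong_mull; exact: cong_sym hfg.
  have hjM : (j <= M)%N by rewrite -ltnS.
  by have := (proj1 (cong_subr0 _ _ _) c1) j hjM; rewrite coef0.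
move: pre.
set f := trunc gam N.
set E := Sig N f - ('X - 1) ^+ N * f.
move=> pre.
set c := E`_N.
have hEc : cong N E (c *: 'X^N).
  move=> j hj; rewrite coefZ coefXn; case: (ltngtP j N) => hjN.
  - by rewrite pre // mulr0.
  - by move: hj; rewrite leqNgt hjN.
  - by rewrite hjN mulr1.
have hsig : Sig (N + N) E = - E.
  rewrite /E Sig_sub.
  have -> : Sig (N + N) (Sig N f) = f * ('X - 1) ^+ N.
    rewrite -[Sig N f]mulr1 Sig_mul ?size_Sig ?size_poly1 //.
    rewrite Sig_invol ?size_trunc //.
    have := @Sig_Xn F N 0 (leq0n N); rewrite expr0 mul1r subn0 => ->.
    by [].
  have -> : Sig (N + N) (('X - 1) ^+ N * f) = Sig N f.
    by rewrite Sig_mul ?size_XsubC1_exp ?size_trunc // Sig_Ypow mul1r.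
  by rewrite opprB mulrC.
have hcN : - c = c * (-1) ^+ N.
  have := (Sig_cong (N + N) hEc) N (leqnn N).
  rewrite hsig coefN -/c Sig_scale coefZ Sig_Xn ?leq_addr // coefXnM ltnn subnn.
  by rewrite addnK coef0_Y.
have hc0 : c = 0.
  case: (boolP (odd N)) => hN; last first.
    apply: two_cancel => //; move: hcN.
    by rewrite -signr_odd (negbTE hN) expr0 mulr1 => ->.
  have [m' hm'] : exists m', N = m'.*2.+1.
    by exists N./2; rewrite -[N in LHS]odd_double_half hN add1n.
  have e1 := K1 gam m'. have e2 := K2 gam m'.
  rewrite hS oppr0 /= -hm' -/f in e1. rewrite hS /= -hm' -/f in e2.
  have : (E * Wp N ^+ m'.+1)`_N = 0 by rewrite /E mulrBl coefB e1 e2 subr0.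
  rewrite (cong_mulr (Wp N ^+ m'.+1) hEc (leqnn N)) -scalerAl coefZ coefXnM ltnn subnn W0pow.
  by move/eqP; rewrite mulf_eq0 expf_eq0 oppr_eq0 oner_eq0 andbF orbF => /eqP.
move=> j hj; case: (ltngtP j N) => hjN.
- by rewrite pre // coef0.
- by move: hj; rewrite leqNgt hjN.
- by rewrite hjN -/c hc0 coef0.
Qed.

Lemma symp_iff gam : (2%:R : F) != 0 -> (INV gam <-> symplectic_series gam).
Proof.
move=> h2; split => h.
  by case=> [|m'] // _; apply: (INV_to_S h2 h m').
by apply: S_to_INV => // m'; apply: (h m'.+1).
Qed.

End Cong.


Section Ser.
Variable F : fieldType.
Implicit Types (f g h : {poly F}).

Lemma factorX (Z : {poly F}) : Z != 0 -> exists v, exists Z' : {poly F}, Z = 'X^v * Z' /\ Z'`_0 != 0.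
Proof.
move: {2}(size Z) (leqnn (size Z)) => s; elim: s Z => [|s IH] Z hs hZ.
  by move: hZ; rewrite -size_poly_eq0; move: hs; rewrite leqn0 => /eqP ->.
case: (boolP (Z`_0 == 0)) => h0; last by exists 0%N, Z; rewrite expr0 mul1r.
have : root Z 0 by rewrite /root horner_coef0.
case/factor_theorem => q hq.
have hq0 : q != 0 by apply: contraNneq hZ => hq0; rewrite hq hq0 mul0r.
have hsq : (size q <= s)%N.
  move: hs; rewrite hq size_mul ?polyXsubC_eq0 // size_XsubC addn2 /=. by [].
have [v [Z' [e1 e2]]] := IH q hsq hq0.
exists v.+1, Z'; split => //.
by rewrite hq subr0 e1 exprS mulrC mulrA.
Qed.

Lemma Sig0 k : Sig k (0 : {poly F}) = 0.
Proof. by apply: cong_eq => n; apply: Sig_cong0. Qed.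

Lemma Sig_neq0 k f : (size f <= k.+1)%N -> f != 0 -> Sig k f != 0.
Proof. by move=> hs; apply: contraNneq => h; rewrite -(Sig_invol hs) h Sig0. Qed.

Lemma Sig_shift k n f : (size f <= k.+1)%N -> Sig (k + n) f = ('X - 1) ^+ n * Sig k f.
Proof.
move=> hs; rewrite -[f in LHS]mulr1 Sig_mul ?size_poly1 //.
have := @Sig_Xn F n 0 (leq0n n); rewrite expr0 mul1r subn0 => ->.
by rewrite mulrC.
Qed.

Lemma trunc_cong (gam : nat -> F) m n : (m <= n)%N -> cong m (trunc gam n) (trunc gam m).
Proof.
move=> hmn j hj; rewrite /trunc !coef_poly !ltnS hj (leq_trans hj hmn) //.
Qed.

Lemma ser_cong (Nn Dd : {poly F}) gam : series_expansion Nn Dd gam ->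
  forall n, cong n (Dd * trunc gam n) Nn.
Proof.
move=> hs n j hj; rewrite -hs coefM; apply: eq_bigr => i _.
by rewrite /trunc coef_poly ltnS (leq_trans (leq_subr _ _) hj).
Qed.

Lemma coef0_Ypow_neq0 v : (('X - 1 : {poly F}) ^+ v)`_0 != 0.
Proof. by rewrite coef0_Y expf_eq0 oppr_eq0 oner_eq0 andbF. Qed.

Lemma star (Nn Dd : {poly F}) gam K : series_expansion Nn Dd gam ->
  (size Nn <= K.+1)%N -> (size Dd <= K.+1)%N ->
  forall n, cong n (Sig K Dd * Sig n (trunc gam n)) (('X - 1) ^+ n * Sig K Nn).
Proof.
move=> hs hN hD n.
rewrite -Sig_mul ?size_trunc // -Sig_shift //.
have hc : cong n (Dd * trunc gam n) Nn by move=> j hj; exact: (ser_cong (n:=n) hs hj).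
move=> j hj; exact: (Sig_cong (K + n) hc hj).
Qed.

Definition PE (Nn Dd : {poly F}) K := Sig K Nn * Dd = Sig K Dd * Nn.

Lemma PE_iff (Nn Dd : {poly F}) gam K : series_expansion Nn Dd gam ->
  (size Nn <= K.+1)%N -> (size Dd <= K.+1)%N -> Dd != 0 ->
  (PE Nn Dd K <-> INV gam).
Proof.
move=> hs hN hD hD0; have hst := star hs hN hD.
split => h.
- rewrite /PE in h.
  have hZ : Sig K Dd * Dd != 0 by rewrite mulf_neq0 // Sig_neq0.
  have [v [Z' [eZ hZ']]] := factorX hZ.
  set E := fun n => Sig n (trunc gam n) - ('X - 1) ^+ n * trunc gam n.
  have key : forall n, cong n ((Sig K Dd * Dd) * E n) 0.
    move=> n; rewrite /E mulrBr; apply: (proj1 (cong_subr0 _ _ _)).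
    have hc : cong n (Dd * trunc gam n) Nn by move=> j hj; exact: (ser_cong (n:=n) hs hj).
    have e1 : Sig K Dd * Dd * Sig n (trunc gam n) = Dd * (Sig K Dd * Sig n (trunc gam n)).
      by rewrite mulrAC mulrC.
    rewrite e1; apply: (cong_trans (@cong_mull F n Dd _ _ (hst n))).
    have e2 : Dd * (('X - 1) ^+ n * Sig K Nn) = ('X - 1) ^+ n * (Sig K Dd * Nn).
      by rewrite -h mulrCA [Dd * _]mulrC.
    rewrite e2.
    have e3 : Sig K Dd * Dd * (('X - 1) ^+ n * trunc gam n) = ('X - 1) ^+ n * (Sig K Dd * (Dd * trunc gam n)).
      by rewrite mulrCA -mulrA.
    rewrite e3; apply: cong_mull; apply: cong_mull; exact: cong_sym hc.
  have hv : forall n, cong n (E (n + v)%N) 0.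
    move=> n; have := key (n + v)%N; rewrite eZ -mulrA -[X in cong _ _ X](mulr0 ('X^v)).
    move/cong_Xn => h1; apply: (cong_cancel hZ'); rewrite mulr0; exact: h1.
  have hrel : forall n, cong n (('X - 1) ^+ v * E n) (E (n + v)%N).
    move=> n; rewrite /E mulrBr; apply: cong_sub.
      rewrite -Sig_shift ?size_trunc //; apply: cong_sym.
      move=> j hj; exact: (Sig_cong (n + v) (trunc_cong gam (leq_addr v n)) hj).
    rewrite mulrA -exprD addnC; apply: cong_mull; apply: cong_sym.
    exact: trunc_cong (leq_addr v n).
  move=> n; apply: (proj2 (cong_subr0 _ _ _)).
  have h3 : cong n (('X - 1) ^+ v * E n) (('X - 1) ^+ v * 0).
    by rewrite mulr0; apply: cong_trans (hrel n) (hv n).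
  exact: (cong_cancel (coef0_Ypow_neq0 v) h3).
- rewrite /PE; apply: cong_eq => n.
  have c1 : cong n (('X - 1) ^+ n * (Sig K Dd * trunc gam n)) (('X - 1) ^+ n * Sig K Nn).
    apply: cong_trans (hst n); rewrite mulrCA; apply: cong_mull; apply: cong_sym; exact: h.
  have c2 := cong_cancel (coef0_Ypow_neq0 n) c1.
  have c3 := cong_mull Dd c2.
  have hc : cong n (Dd * trunc gam n) Nn by move=> j hj; exact: (ser_cong (n:=n) hs hj).
  have c4 := cong_mull (Sig K Dd) hc.
  rewrite mulrC; apply: cong_trans (cong_sym c3) _.
  by rewrite mulrCA; apply: c4.
Qed.

End Ser.


Ltac fld := field; try done; try (by repeat (apply/andP; split)).

Lemma fr7 (L : fieldType) (A x y : L) : y != 0 -> (A * y - x) / y = A - x / y.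
Proof. by move=> hy; fld. Qed.
Lemma fr8 (L : fieldType) (h v x : L) : v != 0 -> h = v * x -> x = h / v.
Proof. by move=> hv ->; fld. Qed.
Lemma fr9 (L : fieldType) (a b v : L) : v != 0 -> (a / v) / (b / v) = a / b.
Proof. by move=> hv; case: (eqVneq b 0) => [->|hb]; [rewrite mul0r invr0 !mulr0 | fld]. Qed.
Lemma fr10 (L : fieldType) (a b c e f : L) : b != 0 -> f != 0 ->
  (a / b = c * (e / f)) <-> (a * f = c * e * b).
Proof.
move=> hb hf; split => h.
  have -> : a = (a / b) * b by fld. by rewrite h; fld.
apply: (mulIf hb); apply: (mulIf hf).
by rewrite mulfVK // h; fld.
Qed.
Lemma fr11 (L : fieldType) (a b c e f : L) : b != 0 -> f != 0 -> c != 0 ->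
  (a / b = (c^-1) * (e / f)) <-> (a * f * c = e * b).
Proof.
move=> hb hf hc; split => h.
  have -> : a = (a / b) * b by fld. by rewrite h; fld.
apply: (mulIf hb); apply: (mulIf hf); apply: (mulIf hc).
by rewrite mulfVK // h; fld.
Qed.

Section Main.
Variable F : fieldType.
Implicit Types (f g p q : {poly F}) (a : F) (d : int).
Local Notation xf := (('X : {poly F})%:F).
Local Notation yf := (('X - 1 : {poly F})%:F).

Definition rr (a : F) : {poly F} := a%:P - 'X.
Definition UU (a : F) : {poly F} := (a ^+ 2 - 2 * a)%:P + (1 - a) *: 'X.
Definition VV (a : F) : {poly F} := (a - 1)%:P - 'X.

Lemma size_rr a : size (rr a) = 2%N.
Proof. by rewrite /rr -opprB size_polyN size_XsubC. Qed.
Lemma size_VV a : size (VV a) = 2%N.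
Proof. by rewrite /VV -opprB size_polyN size_XsubC. Qed.
Lemma VV_neq0 a : VV a != 0.
Proof. by rewrite -size_poly_eq0 size_VV. Qed.
Lemma rr_invol a : rr a \Po rr a = 'X.
Proof. by rewrite /rr comp_polyB comp_polyC comp_polyX opprB addrC subrK. Qed.
Lemma comp_inj a f g : f \Po rr a = g \Po rr a -> f = g.
Proof.
move=> h; have := congr1 (fun p => p \Po rr a) h.
by rewrite -!comp_polyA rr_invol !comp_polyXr.
Qed.
Lemma comp_exp f (k : nat) (r : {poly F}) : (f ^+ k) \Po r = (f \Po r) ^+ k.
Proof. by rewrite -comp_Xn_poly -comp_polyA comp_Xn_poly. Qed.
Lemma Hom_comp (k : nat) f (u v r : {poly F}) : Hom k f u v \Po r = Hom k f (u \Po r) (v \Po r).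
Proof.
rewrite /Hom linear_sum; apply: eq_bigr => i _.
by rewrite linearZ /= comp_polyM !comp_exp.
Qed.
Lemma UU_r a : UU a \Po rr a = a%:P * ('X - 1) - 'X.
Proof.
rewrite /UU /rr comp_polyD comp_polyC comp_polyZ comp_polyX.
rewrite -!mul_polyC !rmorphB !rmorphM /= ?rmorph1 ?rmorphXn /=.
have -> : (2 : F)%:P = 2 by rewrite rmorphMn rmorph1.
by ring.
Qed.
Lemma VV_r a : VV a \Po rr a = 'X - 1.
Proof.
rewrite /VV /rr comp_polyB comp_polyC comp_polyX rmorphB /= rmorph1.
by ring.
Qed.


Lemma moebE a : moeb a = (UU a)%:F / (VV a)%:F.
Proof. by []. Qed.

Lemma psm_frac a K f : (size f <= K.+1)%N ->
  poly_subst f (moeb a) = (Hom K f (UU a) (VV a))%:F / (VV a)%:F ^+ K.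
Proof.
move=> hs; rewrite moebE; apply: fr8; first by rewrite expf_neq0 // tofrac_eq0 VV_neq0.
by rewrite (Hom_frac (UU a) hs (VV_neq0 a)).
Qed.

Lemma ps_rr_sg a : poly_subst (rr a) (sg F) = (a%:P)%:F - sg F.
Proof. by rewrite /rr ps_sub ps_C ps_X. Qed.

Lemma Hom_r_Sig a K f : (size f <= K.+1)%N ->
  Hom K f (UU a) (VV a) \Po rr a = Sig K (f \Po rr a).
Proof.
move=> hs; rewrite Hom_comp UU_r VV_r; apply: tofrac_inj.
have hs' : (size (f \Po rr a) <= K.+1)%N by rewrite size_comp_poly2 // size_rr.
rewrite (Hom_frac _ hs (XsubC1_neq0 F)) (Sig_frac hs') ps_comp ps_rr_sg.
congr (_ * poly_subst f _).
rewrite tofracB tofracM /sg.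
exact: (fr7 _ _ (yf_neq0 F)).
Qed.

Lemma Hq_neq0 a K q : (size q <= K.+1)%N -> q != 0 -> Hom K q (UU a) (VV a) != 0.
Proof.
move=> hs hq; apply/negP => /eqP h.
have : Sig K (q \Po rr a) != 0.
  apply: Sig_neq0; first by rewrite size_comp_poly2 // size_rr.
  by rewrite comp_poly2_eq0 // size_rr.
by rewrite -Hom_r_Sig // h comp_poly0 eqxx.
Qed.

Lemma comp_iff a f g : (f = g) <-> (f \Po rr a = g \Po rr a).
Proof. by split => [->|]; [|apply: comp_inj]. Qed.

Lemma tofrac_iff f g : (f = g) <-> (f%:F = g%:F).
Proof. by split => [->|]; [|apply: tofrac_inj]. Qed.

Definition E0 p q a (d : int) :=
  poly_subst p (moeb a) / poly_subst q (moeb a) = ((a - 1)%:P - 'X)%:F ^ d * ((p%:F) / (q%:F)).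

Lemma E0_frac p q a d K : (size p <= K.+1)%N -> (size q <= K.+1)%N ->
  E0 p q a d <-> (Hom K p (UU a) (VV a))%:F / (Hom K q (UU a) (VV a))%:F
     = (VV a)%:F ^ d * ((p%:F) / (q%:F)).
Proof.
move=> hp hq; rewrite /E0 (psm_frac a hp) (psm_frac a hq) fr9 //.
by rewrite expf_neq0 // tofrac_eq0 VV_neq0.
Qed.

Lemma Xn_neq0 n : ('X^n : {poly F}) != 0.
Proof. by rewrite expf_neq0 // polyX_eq0. Qed.

Lemma E0_PE_pos p q a n K : (size p <= K.+1)%N -> (size q <= K.+1)%N -> q != 0 ->
  E0 p q a (Posz n) <-> PE (shifted_num p a (Posz n)) (shifted_den q a (Posz n)) (K + n).
Proof.
move=> hp hq hq0.
have hH := Hq_neq0 a hq hq0.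
rewrite (E0_frac a _ hp hq).
have -> : (VV a)%:F ^ (Posz n) = (VV a)%:F ^+ n by [].
rewrite fr10 ?tofrac_eq0 //.
rewrite -tofracXn -!tofracM -tofrac_iff.
rewrite (comp_iff a) !comp_polyM comp_exp VV_r !Hom_r_Sig //.
rewrite /PE /shifted_num /shifted_den -/(rr a).
have hpt : (size (p \Po rr a) <= K.+1)%N by rewrite size_comp_poly2 // size_rr.
have hqt : (size (q \Po rr a) <= K.+1)%N by rewrite size_comp_poly2 // size_rr.
move: hpt hqt; set pt := p \Po rr a; set qt := q \Po rr a => hpt hqt.
have e1 : Sig (K + n) ('X^n * pt) = 'X^n * Sig K pt.
  by rewrite addnC Sig_mul ?size_polyXn // Sig_Xn // subnn expr0 mulr1.
have e2 : Sig (K + n) qt = ('X - 1) ^+ n * Sig K qt by rewrite Sig_shift.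
rewrite e1 e2; split => h.
  by rewrite -mulrA h; ring.
apply: (mulfI (Xn_neq0 n)); rewrite mulrA h; ring.
Qed.

Lemma E0_PE_neg p q a n K : (size p <= K.+1)%N -> (size q <= K.+1)%N -> q != 0 ->
  E0 p q a (Negz n) <-> PE (shifted_num p a (Negz n)) (shifted_den q a (Negz n)) (K + n.+1).
Proof.
move=> hp hq hq0.
have hH := Hq_neq0 a hq hq0.
rewrite (E0_frac a _ hp hq).
have -> : (VV a)%:F ^ (Negz n) = ((VV a)%:F ^+ n.+1)^-1 by [].
rewrite fr11 ?tofrac_eq0 ?expf_neq0 ?tofrac_eq0 ?VV_neq0 //.
rewrite -tofracXn -!tofracM -tofrac_iff.
rewrite (comp_iff a) !comp_polyM comp_exp VV_r !Hom_r_Sig //.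
rewrite /PE /shifted_num /shifted_den -/(rr a).
have hpt : (size (p \Po rr a) <= K.+1)%N by rewrite size_comp_poly2 // size_rr.
have hqt : (size (q \Po rr a) <= K.+1)%N by rewrite size_comp_poly2 // size_rr.
move: hpt hqt; set pt := p \Po rr a; set qt := q \Po rr a => hpt hqt.
have e1 : Sig (K + n.+1) ('X^(n.+1) * qt) = 'X^(n.+1) * Sig K qt.
  by rewrite addnC Sig_mul ?size_polyXn // Sig_Xn // subnn expr0 mulr1.
have e2 : Sig (K + n.+1) pt = ('X - 1) ^+ n.+1 * Sig K pt by rewrite Sig_shift.
rewrite e1 e2; split => h.
  transitivity ('X^(n.+1) * (Sig K pt * qt * ('X - 1) ^+ n.+1)); first by ring.
  by rewrite h; ring.
apply: (mulfI (Xn_neq0 n.+1)).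
transitivity (('X - 1) ^+ n.+1 * Sig K pt * ('X^(n.+1) * qt)); first by ring.
by rewrite h; ring.
Qed.

Theorem main_gen p q a d : (2%:R : F) != 0 -> q != 0 -> pole_order_le p q a d ->
  (symplectic_at p q a d <-> E0 p q a d).
Proof.
move=> h2 hq0 [gam hser].
set K := (size p + size q)%N.
have hp : (size p <= K.+1)%N by rewrite /K; lia.
have hq : (size q <= K.+1)%N by rewrite /K; lia.
have hpt : (size (p \Po rr a) <= K.+1)%N by rewrite size_comp_poly2 // size_rr.
have hqt : (size (q \Po rr a) <= K.+1)%N by rewrite size_comp_poly2 // size_rr.
have hqt0 : q \Po rr a != 0 by rewrite comp_poly2_eq0 // size_rr.
suff [K' [hN [hD [hD0 hE]]]] : exists K', (size (shifted_num p a d) <= K'.+1)%N /\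
    (size (shifted_den q a d) <= K'.+1)%N /\ shifted_den q a d != 0 /\
    (E0 p q a d <-> PE (shifted_num p a d) (shifted_den q a d) K').
  rewrite hE; split.
  - case=> gam' [hs' hsym]; apply/(PE_iff hs' hN hD hD0).
    exact/symp_iff.
  - move=> hPE; exists gam; split => //.
    apply/symp_iff => //; exact/(PE_iff hser hN hD hD0).
case: d hser => n hser.
- exists (K + n)%N; rewrite /shifted_num /shifted_den -/(rr a); split; [|split; [|split]].
  + rewrite (leq_trans (size_polyMleq _ _)) // size_polyXn; lia.
  + by rewrite (leq_trans hqt) // ltnS leq_addr.
  + exact: hqt0.
  + exact: E0_PE_pos.
- exists (K + n.+1)%N; rewrite /shifted_num /shifted_den -/(rr a); split; [|split; [|split]].
  + by rewrite (leq_trans hpt) // ltnS leq_addr.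
  + rewrite (leq_trans (size_polyMleq _ _)) // size_polyXn; lia.
  + by rewrite mulf_neq0 // Xn_neq0.
  + exact: E0_PE_neg.
Qed.

End Main.

Theorem corollary1p7 (R : realType) (p q : {poly R[i]}) (a : R[i]) (d : int) :
  q != 0 ->
  pole_order_le p q a d ->
  (symplectic_at p q a d <->
   poly_subst p (moeb a) / poly_subst q (moeb a)
   = ((a - 1)%:P - 'X)%:F ^ d * ((p%:F) / (q%:F))).
Proof.
move=> hq hpo.
have h2 : (2%:R : R[i]) != 0 by rewrite pnatr_eq0.
exact: (main_gen h2 hq hpo).
Qed.
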